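(* Let $\mathcal{C}$ be a finite set of classes and let $(\ell_\star, \ell_a, \ell_b)$ be a random tuple of $\mathcal{C}$-valued labels ($\ell_\star$ the oracle label) such that for every $\mathcal{C}$-valued random variable $\ell_\times$ with $\ell_\times \ne \ell_\star$ almost surely, $\mathbb{P}(\ell_b = \ell_\star \mid \ell_a \ne \ell_\star) \ge \mathbb{P}(\ell_b = \ell_\times \mid \ell_a \ne \ell_\star)$. Let $(\ell_\star^{(n)}, \ell_a^{(n)}, \ell_b^{(n)})$, $n = 1, \dots, N$, be $N$ independent copies of this tuple, and let $\mathbb{P}^{(N)}(\ell_a = \ell_b) = \frac{1}{N}\sum_{n=1}^N [\ell_a^{(n)} = \ell_b^{(n)}]$. Then for every $t_l > 0$, with probability at least $1 - \delta_l$ where $\delta_l = \exp(-2 N t_l^2)$, $$\mathbb{P}^{(N)}(\ell_a = \ell_b) \le t_l + \mathbb{P}(\ell_b = \ell_\star).$$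
   Context: $[\cdot]$ denotes the Iverson bracket. Conditional probabilities given an event of probability zero are taken to be $0$. *)

(* Defs.v *)
From mathcomp Require Import all_boot all_order all_algebra.
From mathcomp Require Import all_classical all_reals all_analysis.
Set Implicit Arguments. Unset Strict Implicit. Unset Printing Implicit Defensive.
Import Order.TTheory GRing.Theory Num.Theory.
Local Open Scope ring_scope.

Section Prob.
Variables (R : realType) (Omega : finType).

Definition is_distr (P : Omega -> R) :=
  (forall w, 0 <= P w) /\ \sum_(w : Omega) P w = 1.

Definition prob (P : Omega -> R) (A : pred Omega) : R :=
  \sum_(w : Omega | A w) P w.

Definition cond_prob (P : Omega -> R) (A B : pred Omega) : R :=
  if prob P B == 0 then 0 else prob P (predI A B) / prob P B.

(* law of N independent copies: product distribution on Omega^N *)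
Definition prod_distr (N : nat) (P : Omega -> R) : {ffun 'I_N -> Omega} -> R :=
  fun ws => \prod_(n < N) P (ws n).

Definition empirical (N : nat) (A : pred Omega) (ws : {ffun 'I_N -> Omega}) : R :=
  (\sum_(n < N) ((A (ws n) : bool)%:R : R)) / N%:R.
End Prob.
Arguments prod_distr {R Omega} N P.
Arguments is_distr {R Omega} P.
Arguments prob {R Omega} P A.
Arguments cond_prob {R Omega} P A B.
Arguments empirical {R Omega N} A ws.

(* Main.v *)
Require Import Defs.
From mathcomp Require Import all_boot all_order all_algebra.
From mathcomp Require Import all_classical all_reals all_analysis.
From mathcomp Require Import ring lra.
Import Order.TTheory GRing.Theory Num.Theory.
Import numFieldNormedType.Exports.
Local Open Scope ring_scope.
Section S.
Variable R : realType.

Lemma scE (a b : R) : a *: b = a * b. Proof. by []. Qed.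

Lemma mono0 (f df : R -> R) : (forall x : R, is_derive x (1:R) f (df x)) ->
  (forall x : R, 0 <= x -> 0 <= df x) -> forall x : R, 0 <= x -> f 0 <= f x.
Proof.
move=> fd dfge x x0.
have [c c0x E] : exists2 c : R, c \in `[0, x]%R & f x - f 0 = df c * (x - 0).
  apply: (MVT_segment (df:=df) x0); last first.
    apply: continuous_subspaceT => r.
    apply/differentiable_continuous/derivable1_diffP.
    exact: ex_derive.
rewrite -subr_ge0 E subr0 mulr_ge0 //; apply: dfge.
by move: c0x; rewrite in_itv /= => /andP[].
Qed.

Lemma dG (q s : R) : is_derive s 1 (fun y => expR (-(y^+2/8 + y*q))) (expR (-(s^+2/8 + s*q)) * (-(s/4 + q))).
Proof.
have h1 : is_derive s (1:R) (fun y : R => -(y^+2/8 + y*q)) (-(s/4 + q)).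
  apply: is_derive_eq.
  by rewrite !scE; field.
exact: (is_derive1_comp (f:=expR) (is_derive_expR _) h1).
Qed.

Lemma Dpos (q y : R) : 0 <= q <= 1 -> 0 < 1 - q + q * expR y.
Proof.
move=> /andP[q0 q1]; have e0 := expR_gt0 y.
have qe : 0 <= q * expR y by rewrite mulr_ge0 // ltW.
have [->|qn1] := eqVneq q 1; first by rewrite subrr add0r mul1r.
have : q < 1 by rewrite lt_neqAle qn1 q1.
lra.
Qed.

Lemma dD (q y : R) : is_derive y (1:R) (fun y => 1 - q + q * expR y) (q * expR y).
Proof. by apply: is_derive_eq; rewrite !scE; ring. Qed.

Lemma hpos (q y : R) : 0 <= q <= 1 -> 0 <= y ->
  0 <= y/4 + q - 1 + (1-q) * (1 - q + q * expR y)^-1.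
Proof.
move=> qi y0.
pose h := fun y : R => y/4 + q - 1 + (1-q) * (1 - q + q * expR y)^-1.
pose dh := fun y : R => (1 - q - q * expR y)^+2 / (4 * (1 - q + q * expR y)^+2).
have hd : forall x : R, is_derive x (1:R) h (dh x).
  move=> x; have Dx := @Dpos q x qi.
  have := @is_deriveV R (fun y => 1 - q + q * expR y) x _ _ (lt0r_neq0 Dx) (dD q x).
  move=> hv.
  rewrite /h /dh; apply: is_derive_eq.
  by rewrite !scE; field; exact: lt0r_neq0.
have := @mono0 h dh hd _ y y0; rewrite /h expR0 mulr1 subrK divr1.
have -> : 0 / 4 + q - 1 + (1 - q) = 0 :> R by ring.
move=> -> // x _.
rewrite /dh; apply: divr_ge0; first exact: sqr_ge0.
by rewrite mulr_ge0 // sqr_ge0.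
Qed.


Lemma hoeff (q s : R) : 0 <= q <= 1 -> 0 <= s ->
  (1-q) * expR (-(s*q)) + q * expR (s*(1-q)) <= expR (s^+2/8).
Proof.
move=> qi s0.
pose G := fun y : R => -((1 - q + q * expR y) * expR (-(y^+2/8 + y*q))).
pose dG' := fun y : R => expR (-(y^+2/8 + y*q)) * (1 - q + q * expR y) *
   (y/4 + q - 1 + (1-q) * (1 - q + q * expR y)^-1).
have Gd : forall x : R, is_derive x (1:R) G (dG' x).
  move=> x; have Dx := @Dpos q x qi; have h1 := dG q x; have h2 := dD q x.
  rewrite /G/dG'; apply: is_derive_eq; rewrite !scE.
  by field; exact: lt0r_neq0.
have := @mono0 G dG' Gd _ s s0.
rewrite /G expR0 mulr1 subrK !expr0n /= mul0r mul0r add0r oppr0 expR0 mulr1.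
rewrite lerN2 => /(_ _)-H.
have {H} : (1 - q + q * expR s) * expR (- (s ^+ 2 / 8 + s * q)) <= 1.
  apply: H => x x0; rewrite /dG' mulr_ge0 ?hpos //.
  by rewrite mulr_ge0 ?expR_ge0 // ltW // Dpos.
have -> : s * (1 - q) = s + - (s * q) by ring.
rewrite opprD !expRD expRN.
have e1 := expR_gt0 (s ^+ 2 / 8).
set E1 := expR (s ^+ 2 / 8); set E2 := expR (- (s * q)); set E3 := expR s.
rewrite -/E1; set E4 := expR (s * q) => H.
have E4p : 0 < E4 by apply: expR_gt0.
rewrite -[E1 in _ <= E1]mul1r -ler_pdivrMr //.
apply: le_trans H; rewrite le_eqVlt; apply/orP; left; apply/eqP.
rewrite expRN -/E1; field; rewrite ?lt0r_neq0 //.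
Qed.

End S.

Section ProbLemmas.
Context {R : realType} {Omega : finType} {P : Omega -> R}.
Hypothesis P0 : forall w, 0 <= P w.

Lemma prob_split' (A B : pred Omega) :
  prob P A = prob P (predI A B) + prob P (predI A (predC B)).
Proof. by rewrite /prob (bigID B) /=. Qed.

Lemma prob_ge0 (A : pred Omega) : 0 <= prob P A.
Proof. by rewrite /prob sumr_ge0. Qed.

Lemma prob_le (A B : pred Omega) : (forall w, A w -> B w) -> prob P A <= prob P B.
Proof.
move=> AB; rewrite /prob [X in _ <= X](bigID A) /=.
have -> : \sum_(i | B i && A i) P i = \sum_(i | A i) P i.
  by apply: eq_bigl => w; case Aw: (A w); rewrite ?andbT ?andbF ?AB.
by rewrite lerDl sumr_ge0.
Qed.

Lemma prob_eq (A B : pred Omega) : A =1 B -> prob P A = prob P B.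
Proof. by move=> AB; apply: eq_bigl. Qed.

End ProbLemmas.

Lemma prob_split (R : realType) (Omega : finType) (P : Omega -> R) (A B : pred Omega) :
  prob P A = prob P (predI A B) + prob P (predI A (predC B)).
Proof. exact: prob_split'. Qed.
Arguments prob_split {R Omega}.

Lemma key (R : realType) (C Omega : finType) (P : Omega -> R)
  (ls la lb : Omega -> C) (P0 : forall w, 0 <= P w)
  (hyp : forall lx : Omega -> C,
     (forall w, 0 < P w -> lx w != ls w) ->
     cond_prob P (fun w => lb w == lx w) (fun w => la w != ls w)
       <= cond_prob P (fun w => lb w == ls w) (fun w => la w != ls w)) :
  prob P (fun w => la w == lb w) <= prob P (fun w => lb w == ls w).
Proof.
pose B := fun w => la w != ls w.
rewrite (prob_split P _ B) [prob P (fun w => lb w == ls w)](prob_split P _ B).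
have -> : prob P (predI (fun w => la w == lb w) (predC B)) =
          prob P (predI (fun w => lb w == ls w) (predC B)).
  apply: (@prob_eq _ _ P) => w /=; rewrite /B negbK.
  by case: (la w =P ls w) => [->|_]; rewrite ?andbT ?andbF // eq_sym.
rewrite lerD2r.
have [PB|PB] := eqVneq (prob P B) 0.
  apply: (@le_trans _ _ (prob P B)); first by apply: prob_le => // w /andP[].
  by rewrite PB (prob_ge0 P0).
have [w0 Bw0|none] := pickP B; last first.
  by move: PB; rewrite /prob big_pred0 ?eqxx.
pose lx w := if B w then la w else if la w0 != ls w then la w0 else ls w0.
have hl : forall w, 0 < P w -> lx w != ls w.
  move=> w _; rewrite /lx; case Bw: (B w) => //.
  case: ifP => // /negbFE/eqP <-.
  by rewrite eq_sym.
have := hyp lx hl; rewrite /cond_prob -/B (negbTE PB).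
have PBp : 0 < prob P B by rewrite lt_def PB (prob_ge0 P0).
rewrite ler_pM2r ?invr_gt0 //.
apply: le_trans; rewrite le_eqVlt; apply/orP; left; apply/eqP.
apply: (@prob_eq _ _ P) => w /=; rewrite /lx.
by case Bw: (B w); rewrite ?andbT ?andbF // eq_sym.
Qed.

Lemma sum_prod (R : realType) (Omega : finType) (N : nat) (F : Omega -> R) :
  \sum_(ws : {ffun 'I_N -> Omega}) \prod_(n < N) F (ws n) = (\sum_w F w) ^+ N.
Proof. by rewrite -[in RHS](card_ord N) -prodr_const bigA_distr_bigA. Qed.

Theorem theorem6 (R : realType) (C Omega : finType) (P : Omega -> R)
  (ls la lb : Omega -> C) (N : nat) (hN : (0 < N)%N)
  (hP : is_distr P)
  (hyp : forall lx : Omega -> C,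
     (forall w, 0 < P w -> lx w != ls w) ->
     cond_prob P (fun w => lb w == lx w) (fun w => la w != ls w)
       <= cond_prob P (fun w => lb w == ls w) (fun w => la w != ls w))
  (t : R) (ht : 0 < t) :
  1 - expR (- (2 * N%:R * t ^+ 2))
    <= prob (prod_distr N P)
         (fun ws => empirical (fun w => la w == lb w) ws
                    <= t + prob P (fun w => lb w == ls w)).
Proof.
have [P0 P1] := hP.
have qp := @key _ _ _ P ls la lb P0 hyp.
set A := fun w => la w == lb w.
set p := prob P (fun w => lb w == ls w).
set q := prob P A.
fold A p q in qp.
have q0 : 0 <= q := prob_ge0 P0 A.
have PT : prob P predT = 1 by rewrite /prob -P1; apply: eq_bigl.
have PC : prob P (predC A) = 1 - q.
  rewrite -PT (prob_split P predT A) /q.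
  have -> : prob P (predI predT A) = prob P A by apply: prob_eq.
  have -> : prob P (predI predT (predC A)) = prob P (predC A) by apply: prob_eq.
  by ring.
have q1 : q <= 1 by rewrite -PT; apply: prob_le.
set Q := prod_distr N P.
set Ev := fun ws => empirical A ws <= t + p.
have Q0 : forall ws, 0 <= Q ws by move=> ws; apply: prodr_ge0.
have Qtot : prob Q Ev + prob Q (predC Ev) = 1.
  have : \sum_ws Q ws = 1 by rewrite /Q /prod_distr sum_prod P1 expr1n.
  by rewrite (bigID Ev) /=.
suff H : prob Q (predC Ev) <= expR (- (2 * N%:R * t ^+ 2)) by lra.
pose s := 4 * t.
pose e w := expR (s * ((A w)%:R - q - t)).
have e0 : forall w, 0 <= e w by move=> w; apply: expR_ge0.
have N0 : (0 : R) < N%:R by rewrite ltr0n.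
apply: (@le_trans _ _ (\sum_ws Q ws * \prod_(n < N) e (ws n))).
  rewrite /prob [X in _ <= X](bigID (predC Ev)) /=.
  apply: ler_wpDr; first by apply: sumr_ge0 => ws _; rewrite mulr_ge0 // prodr_ge0.
  apply: ler_sum => ws nEv; apply: ler_peMr => //.
  rewrite /e -expR_sum.
  set x := \sum_(_ <- _ | _) _.
  apply: le_trans (expR_ge1Dx x); rewrite lerDl.
  have -> : x = s * ((\sum_(n < N) (A (ws n))%:R) - N%:R * (q + t)).
    rewrite /x -mulr_sumr; congr (s * _).
    by rewrite !sumrB !sumr_const card_ord mulr_natl mulrnDl opprD addrA.
  move: nEv; rewrite /Ev /empirical -ltNge ltr_pdivlMr //.
  set SX := \sum_(_ < _) _ => HS.
  apply: mulr_ge0; first by rewrite /s mulr_ge0 // ltW.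
  rewrite subr_ge0 mulrC; apply: le_trans (ltW HS).
  by apply: ler_wpM2r; [exact: ltW | lra].
have -> : \sum_ws Q ws * \prod_(n < N) e (ws n) = (\sum_w P w * e w) ^+ N.
  rewrite -sum_prod; apply: eq_bigr => ws _.
  by rewrite /Q /prod_distr -big_split.
have S3 : \sum_w P w * e w <= expR (- (2 * t ^+ 2)).
  have -> : \sum_w P w * e w = expR (- (s * t)) *
       ((1 - q) * expR (- (s * q)) + q * expR (s * (1 - q))).
    rewrite (bigID A) /=.
    have -> : \sum_(i | A i) P i * e i = q * (expR (s * (1 - q)) * expR (- (s * t))).
      transitivity (\sum_(i | A i) P i * (expR (s * (1 - q)) * expR (- (s * t)))).
        apply: eq_bigr => w Aw; rewrite /e Aw /= -expRD; congr (_ * expR _); ring.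
      by rewrite -mulr_suml.
    have -> : \sum_(i | ~~ A i) P i * e i = (1 - q) * (expR (- (s * q)) * expR (- (s * t))).
      transitivity (\sum_(i | ~~ A i) P i * (expR (- (s * q)) * expR (- (s * t)))).
        apply: eq_bigr => w Aw; rewrite /e (negbTE Aw) /= -expRD; congr (_ * expR _); ring.
      by rewrite -mulr_suml -PC.
    ring.
  apply: le_trans (_ : expR (- (s * t)) * expR (s ^+ 2 / 8) <= _).
    by rewrite ler_pM2l ?expR_gt0 // hoeff // ?q0 ?q1 // /s mulr_ge0 // ltW.
  by rewrite -expRD le_eqVlt; apply/orP; left; apply/eqP; congr expR; rewrite /s; field.
apply: le_trans (_ : expR (- (2 * t ^+ 2)) ^+ N <= _).
  by apply: lerXn2r; rewrite // ?nnegrE ?sumr_ge0 ?expR_ge0 // => w _; rewrite mulr_ge0.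
by rewrite -expRM_natl le_eqVlt; apply/orP; left; apply/eqP; congr expR; ring.
Qed.
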